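(* Let $G$ be a triangle-free graph and let $H_G$ be the graph with $V(H_G)=V(G)\cup\{a,b,c,d\}$ (four new vertices) and $E(H_G)=E(G)\cup\{ab,cd\}\cup E'$, where $E'=\{bv: v\in V(G)\}\cup\{cv: v\in V(G)\}$. Then there exists a line geodetic set $Q$ of $H_G$ of minimum cardinality such that $Q\cap E'=\emptyset$.
   Context: All graphs are finite, simple and undirected. The line graph $L(G)$ has vertex set $E(G)$, two edges adjacent iff they share an endpoint. For a graph $H$, a set $S\subseteq E(H)$ is a line geodetic set of $H$ if every edge of $E(H)\setminus S$ lies on some shortest path in $L(H)$ between two edges of $S$; equivalently, $S$ is a geodetic set of $L(H)$, where a set $T$ of vertices of a graph $F$ is geodetic if every vertex of $F$ lies on some shortest path between two vertices of $T$. *)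

(* Defs.v *)
From mathcomp Require Import all_boot.
Set Implicit Arguments. Unset Strict Implicit. Unset Printing Implicit Defensive.

Section Generic.
Variable W : finType.
Variable r : rel W.

Definition is_walk (u v : W) (p : seq W) : bool := path r u p && (last u p == v).

Definition shortest_path (u v : W) (p : seq W) : Prop :=
  is_walk u v p /\ forall q, is_walk u v q -> size p <= size q.

Definition on_geodesic (u v x : W) : Prop :=
  exists p, shortest_path u v p /\ x \in u :: p.

Definition geodetic_set (T : {set W}) : Prop :=
  forall x : W, exists u v, [/\ u \in T, v \in T & on_geodesic u v x].
End Generic.

Section Line.
Variable V : finType.
Variable h : rel V.

Definition is_edge (s : {set V}) : bool :=
  [exists x, exists y, h x y && (s == [set x; y])].

Definition edge_type := {s : {set V} | is_edge s}.

Definition line_rel : rel edge_type :=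
  fun e1 e2 => (val e1 != val e2) && (val e1 :&: val e2 != set0).

Definition line_geodetic_set (S : {set edge_type}) : Prop :=
  geodetic_set line_rel S.
End Line.

Definition triangle_free (T : finType) (e : rel T) : Prop :=
  forall x y z, ~ [&& e x y, e y z & e x z].

(* V(H_G) = V(G) + {a,b,c,d}, with a,b,c,d = inr 0, inr 1, inr 2, inr 3 *)
Definition HV (T : finType) : finType := (T + 'I_4)%type.

Definition Hrel (T : finType) (e : rel T) : rel (HV T) :=
  fun x y =>
    match x, y with
    | inl u, inl v => e u v
    | inr i, inr j =>
        [|| (nat_of_ord i == 0) && (nat_of_ord j == 1),
            (nat_of_ord i == 1) && (nat_of_ord j == 0),
            (nat_of_ord i == 2) && (nat_of_ord j == 3)
          | (nat_of_ord i == 3) && (nat_of_ord j == 2)]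
    | inl _, inr i => (nat_of_ord i == 1) || (nat_of_ord i == 2)
    | inr i, inl _ => (nat_of_ord i == 1) || (nat_of_ord i == 2)
    end.

Definition vb (T : finType) : HV T := inr (@Ordinal 4 1 isT).
Definition vc (T : finType) : HV T := inr (@Ordinal 4 2 isT).

Definition Eprime (T : finType) (e : rel T) : {set edge_type (Hrel e)} :=
  [set f : edge_type (Hrel e) | [exists v : T,
      (val f == [set vb T; inl v]) || (val f == [set vc T; inl v])]].

(* Main.v *)
Require Import Defs.
Require Import Defs.
From mathcomp Require Import all_boot.
From Stdlib Require Import Classical_Prop.
Set Implicit Arguments. Unset Strict Implicit. Unset Printing Implicit Defensive.

Lemma geo_self (W : finType) (r : rel W) u : on_geodesic r u u u.
Proof.
exists [::]; split; last by rewrite inE eqxx.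
by split; first by rewrite /is_walk /= eqxx.
Qed.

Lemma geo_two (W : finType) (r : rel W) u x w :
  r u x -> r x w -> u != w -> ~~ r u w -> on_geodesic r u w x.
Proof.
move=> ux xw uw nuw; exists [:: x; w]; split; last by rewrite !inE eqxx orbT.
split; first by rewrite /is_walk /= ux xw eqxx.
case=> [|y [|z q]] //=.
- by rewrite /is_walk /= => /eqP E; rewrite E eqxx in uw.
- by rewrite /is_walk /= andbT => /andP [uy /eqP E]; rewrite -E uy in nuw.
Qed.

Lemma geo_three (W : finType) (r : rel W) u y z w :
  r u y -> r y z -> r z w -> u != w -> ~~ r u w ->
  (forall m, r u m -> r m w -> False) ->
  on_geodesic r u w y /\ on_geodesic r u w z.
Proof.
move=> uy yz zw uw nuw nm.
have sp : shortest_path r u w [:: y; z; w].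
  split; first by rewrite /is_walk /= uy yz zw eqxx.
  case=> [|y1 [|z1 [|t q]]] //=.
  - by rewrite /is_walk /= => /eqP E; rewrite E eqxx in uw.
  - by rewrite /is_walk /= andbT => /andP [uy1 /eqP E]; rewrite -E uy1 in nuw.
  - rewrite /is_walk /= andbT => /andP [/andP [uy1 y1z1] /eqP E].
    by case: (nm y1) => //; rewrite -E.
split; exists [:: y; z; w]; split => //; by rewrite !inE eqxx ?orbT.
Qed.

Lemma interior (W : finType) (r : rel W) u w x : on_geodesic r u w x -> x != u -> x != w ->
  exists y z, [/\ r y x, r x z, y != z & ~~ r y z].
Proof.
case=> p [[/andP [pp /eqP lp] sh] xp] xu xw.
rewrite inE (negbTE xu) /= in xp.
case/splitPr: xp pp lp sh => p1 p2.
rewrite cat_path last_cat /= => /andP [pp1 /andP [yx pp2]] lp sh.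
case: p2 pp2 lp sh => [|z p3] /=; first by move=> _ E; rewrite E eqxx in xw.
case/andP=> xz pp3 lp sh.
exists (last u p1), z; split => //.
- apply/eqP => E. have := sh (p1 ++ p3).
  rewrite /is_walk cat_path last_cat pp1 E pp3 lp eqxx !size_cat /= => /(_ isT).
  by rewrite leq_add2l ltnNge leqW.
- apply/negP => yz. have := sh (p1 ++ z :: p3).
  rewrite /is_walk cat_path last_cat pp1 /= yz pp3 lp eqxx !size_cat /= => /(_ isT).
  by rewrite leq_add2l ltnn.
Qed.

Lemma geo_small (W : finType) (r : rel W) u w x :
  (u = w \/ r u w \/ exists z, r u z /\ r z w) -> on_geodesic r u w x ->
  x = u \/ x = w \/ [/\ r u x, r x w, u != w & ~~ r u w].
Proof.
move=> hd [p [[/andP [pp /eqP lp] sh] xp]].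
have sp : size p <= 2.
  case: hd => [E|[uw|[z [uz zw]]]].
  - by have := sh [::]; rewrite /is_walk /= E eqxx => /(_ isT) /leq_trans; apply.
  - by have := sh [:: w]; rewrite /is_walk /= uw eqxx => /(_ isT) /leq_trans; apply.
  - by have := sh [:: z; w]; rewrite /is_walk /= uz zw eqxx => /(_ isT).
case: p pp lp sh xp sp => [|y [|y' [|y'' q]]] //=.
- by move=> _ _ _; rewrite inE => /eqP; left.
- move=> _ -> _; rewrite !inE => /orP [] /eqP; by [left|right; left].
- move=> /andP [uy /andP [yy' _]] E sh; subst w; rewrite !inE => /or3P [] /eqP -> _;
    [by left|idtac|by right; left].
  right; right; split => //.
  + apply/eqP => E'; have := sh [::]; by rewrite /is_walk /= E' eqxx => /(_ isT).
  + apply/negP => uw; have := sh [:: y']; by rewrite /is_walk /= uw eqxx => /(_ isT).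
Qed.

Lemma exists_min (X : finType) (P : {set X} -> Prop) : P setT ->
  exists S, P S /\ forall S', P S' -> #|S| <= #|S'|.
Proof.
move=> PT.
suff H : forall n (S : {set X}), #|S| <= n -> P S -> exists S : {set X}, P S /\ forall S', P S' -> #|S| <= #|S'|.
  exact: (H _ setT (leqnn _) PT).
elim=> [|n IH] S hS PS.
- exists S; split => // S' _; apply: leq_trans hS _; exact: leq0n.
- case: (classic (exists S', P S' /\ #|S'| < #|S|)) => [[S' [PS' lt]]|nex].
  + apply: (IH S') => //; by rewrite -ltnS (leq_trans lt hS).
  + exists S; split => // S' PS'; rewrite leqNgt; apply/negP => lt; apply: nex; by exists S'.
Qed.

Definition va (T : finType) : HV T := inr (@Ordinal 4 0 isT).
Definition vd (T : finType) : HV T := inr (@Ordinal 4 3 isT).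

Lemma HVP (T : finType) (x : HV T) :
  (exists t, x = inl t) \/ x = va T \/ x = vb T \/ x = vc T \/ x = vd T.
Proof.
case: x => [t|i]; first by left; exists t.
right; case: i => [[|[|[|[|m]]]] Hm].
- by left; congr inr; apply: val_inj.
- by right; left; congr inr; apply: val_inj.
- by right; right; left; congr inr; apply: val_inj.
- by right; right; right; congr inr; apply: val_inj.
- by [].
Qed.

Lemma Hrel_sym (T : finType) (e : rel T) : symmetric e -> symmetric (Hrel e).
Proof.
move=> es x y.
case: (HVP x) => [[s ->]|[->|[->|[->|->]]]];
case: (HVP y) => [[t ->]|[->|[->|[->|->]]]] //=.
Qed.

Lemma Hrel_a (T : finType) (e : rel T) q : Hrel e (va T) q -> q = vb T.
Proof. by case: (HVP q) => [[s ->]|[->|[->|[->|->]]]]. Qed.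
Lemma Hrel_d (T : finType) (e : rel T) q : Hrel e (vd T) q -> q = vc T.
Proof. by case: (HVP q) => [[s ->]|[->|[->|[->|->]]]]. Qed.

Definition isl (T : finType) (x : HV T) := if x is inl _ then true else false.

Lemma mkE_proof (T : finType) (e : rel T) x y : Hrel e x y -> is_edge (Hrel e) [set x; y].
Proof. by move=> H; apply/existsP; exists x; apply/existsP; exists y; rewrite H eqxx. Qed.

Definition mkE (T : finType) (e : rel T) x y (H : Hrel e x y) : edge_type (Hrel e) :=
  exist _ [set x; y] (mkE_proof H).

Definition eab (T : finType) (e : rel T) := @mkE T e (va T) (vb T) isT.
Definition ecd (T : finType) (e : rel T) := @mkE T e (vc T) (vd T) isT.
Definition eb (T : finType) (e : rel T) v := @mkE T e (vb T) (inl v) isT.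
Definition ec (T : finType) (e : rel T) v := @mkE T e (vc T) (inl v) isT.

Definition Gedge (T : finType) (e : rel T) (f : edge_type (Hrel e)) :=
  [forall x, (x \in val f) ==> isl x].

Lemma GedgeP (T : finType) (e : rel T) (f : edge_type (Hrel e)) x :
  Gedge f -> x \in val f -> isl x.
Proof. by move/forallP/(_ x)/implyP. Qed.

Lemma edgeP (T : finType) (e : rel T) (f : edge_type (Hrel e)) :
  exists x y, Hrel e x y /\ val f = [set x; y].
Proof.
case: f => s /= /existsP [x /existsP [y /andP [H /eqP E]]]; by exists x, y.
Qed.

Lemma edge_other (T : finType) (e : rel T) (es : symmetric e) (f : edge_type (Hrel e)) p :
  p \in val f -> exists q, Hrel e p q /\ val f = [set p; q].
Proof.
case: (edgeP f) => x [y [H ->]]; rewrite in_set2 => /orP [] /eqP ->.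
- by exists y.
- by exists x; rewrite setUC Hrel_sym.
Qed.

Lemma edge_two (T : finType) (e : rel T) (es : symmetric e) (f : edge_type (Hrel e)) p q :
  p \in val f -> q \in val f -> p != q -> Hrel e p q.
Proof.
case: (edgeP f) => x [y [H ->]]; rewrite !in_set2.
by case/orP=> /eqP ->; case/orP=> /eqP ->; rewrite ?eqxx // Hrel_sym.
Qed.

Lemma edge_det (T : finType) (e : rel T) (f : edge_type (Hrel e)) p q :
  p \in val f -> q \in val f -> p != q -> val f = [set p; q].
Proof.
case: (edgeP f) => x [y [H ->]]; rewrite !in_set2.
by case/orP=> /eqP ->; case/orP=> /eqP ->; rewrite ?eqxx // setUC.
Qed.

Lemma edge_cases (T : finType) (e : rel T) (f : edge_type (Hrel e)) :
  val f = [set va T; vb T] \/ val f = [set vc T; vd T] \/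
      (exists v, val f = [set vb T; inl v]) \/ (exists v, val f = [set vc T; inl v])
    \/ (exists s t, e s t /\ val f = [set inl s; inl t]).
Proof.
case: (edgeP f) => x [y [H ->]].
case: (HVP x) H => [[s ->]|[->|[->|[->|->]]]];
case: (HVP y) => [[t ->]|[->|[->|[->|->]]]] //= H.
- by right; right; right; right; exists s, t.
- by right; right; left; exists s; rewrite setUC.
- by right; right; right; left; exists s; rewrite setUC.
- by left.
- by right; right; left; exists t.
- by left; rewrite setUC.
- by right; right; right; left; exists t.
- by right; left.
- by right; left; rewrite setUC.
Qed.

Section S.
Variables (T : finType) (e : rel T).
Local Notation ET := (edge_type (Hrel e)).
Local Notation R := (@line_rel _ (Hrel e)).

Lemma R_intro (f g : ET) p q : p \in val f -> p \in val g -> q \in val f -> q \notin val g -> R f g.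
Proof.
move=> pf pg qf qg; apply/andP; split.
- by apply/eqP => E; have E' : val f = val g by []; rewrite -E' qf in qg.
- by apply/set0Pn; exists p; rewrite inE pf pg.
Qed.

Lemma R_case (f g : ET) p : p \in val f -> p \in val g -> f = g \/ R f g.
Proof.
move=> pf pg; case: (eqVneq (val f) (val g)) => [E|ne].
- by left; apply: val_inj.
- by right; apply/andP; split => //; apply/set0Pn; exists p; rewrite inE pf pg.
Qed.

Lemma R_elim (f g : ET) : R f g -> exists p, p \in val f /\ p \in val g.
Proof. by case/andP=> _ /set0Pn [p]; rewrite inE => /andP [??]; exists p. Qed.

Lemma R_sym : symmetric R.
Proof. by move=> f g; rewrite /line_rel eq_sym setIC. Qed.

Lemma R_neq (f g : ET) : R f g -> f != g.
Proof. by case/andP => ne _; apply/eqP => E; rewrite E eqxx in ne. Qed.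


Variables (es : symmetric e) (eirr : irreflexive e) (etf : triangle_free e).

Lemma nbr_ab (y : ET) : R (eab e) y -> vb T \in val y.
Proof.
case/R_elim => p [] /=; rewrite in_set2 => /orP [] /eqP -> ay //.
by case: (edge_other es ay) => q [/Hrel_a -> ->]; rewrite in_set2 eqxx orbT.
Qed.

Lemma nbr_cd (y : ET) : R y (ecd e) -> vc T \in val y.
Proof.
case/R_elim => p [] ay /=; rewrite in_set2 => /orP [] /eqP Ep; subst p => //.
by case: (edge_other es ay) => q [/Hrel_d -> ->]; rewrite in_set2 eqxx orbT.
Qed.

Lemma ab_in (S : {set ET}) : line_geodetic_set S -> eab e \in S.
Proof.
move/(_ (eab e)) => [u [w [uS wS g]]].
case: (eqVneq (eab e) u) => [->//|nu]; case: (eqVneq (eab e) w) => [->//|nw].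
case: (interior g nu nw) => y [z [ya az yz nyz]].
have yb : vb T \in val y by apply: nbr_ab; rewrite R_sym.
have zb := nbr_ab az.
by case: (R_case yb zb) => [E|ryz]; [rewrite E eqxx in yz | rewrite ryz in nyz].
Qed.

Lemma cd_in (S : {set ET}) : line_geodetic_set S -> ecd e \in S.
Proof.
move/(_ (ecd e)) => [u [w [uS wS g]]].
case: (eqVneq (ecd e) u) => [->//|nu]; case: (eqVneq (ecd e) w) => [->//|nw].
case: (interior g nu nw) => y [z [ya az yz nyz]].
have yb := nbr_cd ya.
have zb : vc T \in val z by apply: nbr_cd; rewrite R_sym.
by case: (R_case yb zb) => [E|ryz]; [rewrite E eqxx in yz | rewrite ryz in nyz].
Qed.

Lemma Eprime_form (f : ET) : f \in Eprime e ->
  exists v, val f = [set vb T; inl v] \/ val f = [set vc T; inl v].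
Proof. by rewrite inE => /existsP [v /orP [] /eqP E]; exists v; [left|right]. Qed.

Lemma Gedge_notE (f : ET) : Gedge f -> f \notin Eprime e.
Proof.
move=> Gf; apply/negP => /Eprime_form [v [E|E]].
- by have := GedgeP Gf (_ : vb T \in val f); rewrite E in_set2 eqxx => /(_ isT).
- by have := GedgeP Gf (_ : vc T \in val f); rewrite E in_set2 eqxx => /(_ isT).
Qed.

Lemma eab_notE : eab e \notin Eprime e.
Proof.
apply/negP => /Eprime_form [v [E|E]].
- have : va T \in val (eab e) by rewrite /= in_set2 eqxx.
  by rewrite E in_set2.
- have : va T \in val (eab e) by rewrite /= in_set2 eqxx.
  by rewrite E in_set2.
Qed.

Lemma ecd_notE : ecd e \notin Eprime e.
Proof.
apply/negP => /Eprime_form [v [E|E]].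
- have : vd T \in val (ecd e) by rewrite /= in_set2 eqxx orbT.
  by rewrite E in_set2.
- have : vd T \in val (ecd e) by rewrite /= in_set2 eqxx orbT.
  by rewrite E in_set2.
Qed.

Lemma Gedge_form (f : ET) s t : val f = [set inl s; inl t] -> Gedge f.
Proof. by move=> E; apply/forallP => x; apply/implyP; rewrite E in_set2 => /orP [] /eqP ->. Qed.

Definition psi (f : ET) : ET :=
  if [pick g | Gedge g && (val g :&: val f != set0)] is Some g then g else eab e.

Lemma psi_spec (f : ET) r (y : ET) : f \in Eprime e -> inl r \in val f -> Gedge y ->
  inl r \in val y -> Gedge (psi f) /\ inl r \in val (psi f).
Proof.
move=> /Eprime_form [v Ef] rf Gy ry; rewrite /psi; case: pickP => [g /andP [Gg /set0Pn [q]]|none].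
- rewrite inE => /andP [qg qf]; split => //.
  have := GedgeP Gg qg.
  by case: Ef => Ef; move: qf rf; rewrite Ef !in_set2 => /orP [] /eqP Eq; subst q => /= /eqP [->] // _.
- have : Gedge y && (val y :&: val f != set0).
    by rewrite Gy; apply/set0Pn; exists (inl r); rewrite inE ry rf.
  by rewrite none.
Qed.

Lemma psi_notE (f : ET) : psi f \notin Eprime e.
Proof.
rewrite /psi; case: pickP => [g /andP [Gg _]|_]; [exact: Gedge_notE | exact: eab_notE].
Qed.


Lemma chain (g z f : ET) p q : p \in val g -> p \in val z -> q \in val z -> q \in val f ->
  g = f \/ R g f \/ exists m, R g m /\ R m f.
Proof.
move=> pg pz qz qf; case: (R_case pg pz) => [E|gz].
- by subst z; case: (R_case qz qf) => [E|gf]; [left|right; left].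
- by case: (R_case qz qf) => [E|zf]; [subst f; right; left|right; right; exists z].
Qed.

Lemma ecc (f g : ET) : f \in Eprime e -> g = f \/ R g f \/ exists m, R g m /\ R m f.
Proof.
case/Eprime_form => v [Ef|Ef];
case: (edge_cases g) => [Eg|[Eg|[[w Eg]|[[w Eg]|[s [t [st Eg]]]]]]].
- by apply: (@chain g f f (vb T) (vb T)); rewrite ?Eg ?Ef /= !in_set2 ?eqxx ?orbT.
- by apply: (@chain g (ec e v) f (vc T) (inl v)); rewrite ?Eg ?Ef /= !in_set2 ?eqxx ?orbT.
- by apply: (@chain g f f (vb T) (vb T)); rewrite ?Eg ?Ef /= !in_set2 ?eqxx ?orbT.
- by apply: (@chain g (ec e v) f (vc T) (inl v)); rewrite ?Eg ?Ef /= !in_set2 ?eqxx ?orbT.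
- by apply: (@chain g (eb e s) f (inl s) (vb T)); rewrite ?Eg ?Ef /= !in_set2 ?eqxx ?orbT.
- by apply: (@chain g (eb e v) f (vb T) (inl v)); rewrite ?Eg ?Ef /= !in_set2 ?eqxx ?orbT.
- by apply: (@chain g f f (vc T) (vc T)); rewrite ?Eg ?Ef /= !in_set2 ?eqxx ?orbT.
- by apply: (@chain g (eb e v) f (vb T) (inl v)); rewrite ?Eg ?Ef /= !in_set2 ?eqxx ?orbT.
- by apply: (@chain g f f (vc T) (vc T)); rewrite ?Eg ?Ef /= !in_set2 ?eqxx ?orbT.
- by apply: (@chain g (ec e s) f (inl s) (vc T)); rewrite ?Eg ?Ef /= !in_set2 ?eqxx ?orbT.
Qed.

Lemma ecc' (f g : ET) : f \in Eprime e -> f = g \/ R f g \/ exists m, R f m /\ R m g.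
Proof.
move/(ecc g) => [->|[fg|[m [gm mf]]]]; first by left.
- by right; left; rewrite R_sym.
- by right; right; exists m; rewrite R_sym mf R_sym gm.
Qed.

Lemma Ecover v : on_geodesic R (eab e) (ecd e) (eb e v) /\ on_geodesic R (eab e) (ecd e) (ec e v).
Proof.
apply: geo_three.
- by apply: (@R_intro _ _ (vb T) (va T)); rewrite /= !in_set2 ?eqxx ?orbT.
- by apply: (@R_intro _ _ (inl v) (vb T)); rewrite /= !in_set2 ?eqxx ?orbT.
- by apply: (@R_intro _ _ (vc T) (inl v)); rewrite /= !in_set2 ?eqxx ?orbT.
- apply/eqP => E; have : va T \in val (eab e) by rewrite /= in_set2 eqxx.
  by rewrite E /= in_set2.
- apply/negP => /R_elim [p []]; rewrite /= !in_set2.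
  by case: (HVP p) => [[s ->]|[->|[->|[->|->]]]].
- move=> m am mc; have bm := nbr_ab am; have cm := nbr_cd mc.
  by move: (edge_two es bm cm isT).
Qed.

Definition Sp (S : {set ET}) := (S :\: Eprime e) :|: [set psi f | f in S :&: Eprime e].

Lemma Sp1 (S : {set ET}) x : x \in S -> x \notin Eprime e -> x \in Sp S.
Proof. by move=> xS xE; rewrite /Sp in_setU in_setD xS xE. Qed.

Lemma Sp2 (S : {set ET}) x : x \in S -> x \in Eprime e -> psi x \in Sp S.
Proof. by move=> xS xE; rewrite /Sp in_setU; apply/orP; right; apply: imset_f; rewrite inE xS xE. Qed.

Lemma core (S : {set ET}) u w x : u \in S -> w \in S -> u \in Eprime e -> Gedge x ->
  R u x -> R x w -> u != w -> ~~ R u w ->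
  exists a b, [/\ a \in Sp S, b \in Sp S & on_geodesic R a b x].
Proof.
move=> uS wS uE Gx ux xw uw nuw.
case: (R_elim ux) => p [pu px].
have [r Er] : exists r, p = inl r.
  by case: p pu px => [r|i] pu px; [exists r | have := GedgeP Gx px].
subst p.
case: (edge_other es px) => q [Hq Ex].
have [t Et] : exists t, q = inl t.
  have qx : q \in val x by rewrite Ex in_set2 eqxx orbT.
  by case: q Hq Ex qx => [t|i] Hq Ex qx; [exists t | have := GedgeP Gx qx].
subst q; rewrite /= in Hq.
case: (psi_spec uE pu Gx px) => Ga ra.
case: (edge_other es ra) => q [Hq1 Ea].
have [t1 Et1] : exists t1, q = inl t1.
  have qa : q \in val (psi u) by rewrite Ea in_set2 eqxx orbT.
  by case: q Hq1 Ea qa => [t1|i] Hq1 Ea qa; [exists t1 | have := GedgeP Ga qa].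
subst q; rewrite /= in Hq1.
have rt : inl r != inl t :> HV T by apply/eqP => -[E]; subst t; rewrite eirr in Hq.
case: (eqVneq t1 t) => [Et|nt].
  subst t1; exists (psi u), (psi u); split; [exact: Sp2|exact: Sp2|].
  have -> : psi u = x by apply: val_inj; rewrite Ea Ex.
  exact: geo_self.
have tw : inl t \in val w.
  case: (R_elim xw) => p' [p'x p'w]; move: p'x; rewrite Ex in_set2 => /orP [] /eqP Ep'; subst p' => //.
  by case: (R_case pu p'w) => [E|E]; [rewrite E eqxx in uw | rewrite E in nuw].
have tx : inl t \in val x by rewrite Ex in_set2 eqxx orbT.
have [b [bS tb]] : exists b, b \in Sp S /\ inl t \in val b.
  case: (boolP (w \in Eprime e)) => wE.
  - by exists (psi w); split; [exact: Sp2 | case: (psi_spec wE tw Gx tx)].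
  - by exists w; split => //; exact: Sp1.
case: (boolP (inl r \in val b)) => rb.
  exists b, b; split => //.
  have -> : b = x by apply: val_inj; rewrite (edge_det rb tb rt) Ex.
  exact: geo_self.
exists (psi u), b; split; [exact: Sp2 | exact: bS|].
have t1r : inl t1 != inl r :> HV T by apply/eqP => -[E]; subst t1; rewrite eirr in Hq1.
have t1t : inl t1 != inl t :> HV T by apply/eqP => -[E]; rewrite E eqxx in nt.
apply: geo_two.
- apply: (@R_intro _ _ (inl r) (inl t1)) => //; first by rewrite Ea in_set2 eqxx orbT.
  by rewrite Ex in_set2 negb_or t1r t1t.
- exact: (@R_intro _ _ (inl t) (inl r)).
- by apply/eqP => E; rewrite -E ra in rb.
- apply/negP => /R_elim [p2 [p2a p2b]]; move: p2a; rewrite Ea in_set2 => /orP [] /eqP Ep2; subst p2.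
  + by rewrite p2b in rb.
  + have := edge_two es p2b tb t1t; rewrite /= => e1.
    by apply: (etf (x:=r) (y:=t) (z:=t1)); rewrite Hq Hq1 (es t t1) e1.
Qed.
End S.

Theorem mainTheorem7 (T : finType) (e : rel T)
  (e_sym : symmetric e) (e_irr : irreflexive e) (e_tf : triangle_free e) :
  exists Q : {set edge_type (Hrel e)},
    [/\ line_geodetic_set Q,
        (forall S : {set edge_type (Hrel e)}, line_geodetic_set S -> #|Q| <= #|S|)
      & Q :&: Eprime e = set0].
Proof.
have Pt : line_geodetic_set [set: edge_type (Hrel e)].
  by move=> x; exists x, x; split; [exact: in_setT|exact: in_setT|exact: geo_self].
case: (exists_min Pt) => S [PS minS].
exists (Sp S); split.
- move=> x.
  case: (edge_cases x) => [Ex|[Ex|[[v Ex]|[[v Ex]|[s [t [st Ex]]]]]]].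
  + have -> : x = eab e by apply: val_inj.
    by exists (eab e), (eab e); split; [apply: Sp1; [exact: ab_in|exact: eab_notE]..|exact: geo_self].
  + have -> : x = ecd e by apply: val_inj.
    by exists (ecd e), (ecd e); split; [apply: Sp1; [exact: cd_in|exact: ecd_notE]..|exact: geo_self].
  + have -> : x = eb e v by apply: val_inj.
    exists (eab e), (ecd e); split; [apply: Sp1; [exact: ab_in|exact: eab_notE]|
      apply: Sp1; [exact: cd_in|exact: ecd_notE]|].
    by case: (Ecover e_sym v).
  + have -> : x = ec e v by apply: val_inj.
    exists (eab e), (ecd e); split; [apply: Sp1; [exact: ab_in|exact: eab_notE]|
      apply: Sp1; [exact: cd_in|exact: ecd_notE]|].
    by case: (Ecover e_sym v).
  + have Gx := Gedge_form Ex.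
    case: (boolP (x \in S)) => xS.
      by exists x, x; split; [apply: Sp1 => //; exact: Gedge_notE..|exact: geo_self].
    case: (PS x) => u [w [uS wS g]].
    case: (boolP (u \in Eprime e)) => uE.
      case: (geo_small (ecc' w uE) g) => [Eu|[Ew|[ux xw uw nuw]]].
      * by rewrite Eu uS in xS.
      * by rewrite Ew wS in xS.
      * exact: (core e_sym e_irr e_tf uS wS uE Gx ux xw uw nuw).
    case: (boolP (w \in Eprime e)) => wE.
      case: (geo_small (ecc u wE) g) => [Eu|[Ew|[ux xw uw nuw]]].
      * by rewrite Eu uS in xS.
      * by rewrite Ew wS in xS.
      * apply: (core e_sym e_irr e_tf wS uS wE Gx).
        -- by rewrite R_sym.
        -- by rewrite R_sym.
        -- by rewrite eq_sym.
        -- by rewrite R_sym.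
    by exists u, w; split => //; exact: Sp1.
- move=> S0 P0; apply: leq_trans (minS _ P0).
  rewrite /Sp; apply: leq_trans (leq_card_setU _ _).1 _.
  rewrite -(cardsID (Eprime e) S) [X in _ <= X]addnC leq_add2l.
  exact: leq_imset_card.
- apply/setP => f; rewrite inE in_set0; apply/andP => -[fS fE].
  case/setUP: fS => [/setDP [_ /negP //]|/imsetP [g _ E]].
  by subst f; rewrite (negbTE (psi_notE g)) in fE.
Qed.
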